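(* Let $\mathsf{L}$ be an intermediate logic. Every consistent formula of the form $\neg\phi$ is $\mathcal{ST}$-projective in $\mathsf{L}^\neg$, where $\mathcal{ST}$ is the class of all substitutions that are stable in $\mathsf{L}^\neg$.
   Context: Formulas are built from propositional variables, $\bot,\top$ with $\wedge,\vee,\to$; $\neg\phi:=\phi\to\bot$. An intermediate theory is a set $\mathsf T$ of formulas closed under modus ponens with $\mathsf{IPC}\subseteq\mathsf T\subseteq\mathsf{CPC}$; an intermediate logic is an intermediate theory closed under uniform substitution. $\Gamma\vdash_{\mathsf T}\phi$ means $\phi$ is derivable from $\Gamma\cup\mathsf T$ by modus ponens; $\vdash_{\mathsf T}\phi$ means $\phi\in\mathsf T$. For an intermediate logic $\mathsf L$, $\phi^\neg$ is obtained by replacing every propositional variable $p$ in $\phi$ by $\neg p$, and $\mathsf L^\neg=\{\phi\mid\phi^\neg\in\mathsf L\}$. A substitution is a map on formulas commuting with the connectives and constants; it is stable in $\mathsf L^\neg$ if $\vdash_{\mathsf L^\neg}\sigma(p)\leftrightarrow\neg\neg\sigma(p)$ for all propositional variables $p$. A formula $\psi$ is consistent if $\psi\nvdash_{\mathsf L^\neg}\bot$. For a set $\mathcal S$ of substitutions, $\psi$ is $\mathcal S$-projective in $\mathsf L^\neg$ if there is $\sigma\in\mathcal S$ with $\vdash_{\mathsf L^\neg}\sigma(\psi)$, and $\psi,\sigma(p)\vdash_{\mathsf L^\neg}p$ and $\psi,p\vdash_{\mathsf L^\neg}\sigma(p)$ for all propositional variables $p$. *)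

(* Defs.v *)
From Stdlib Require Import Bool.

Inductive form : Type :=
| Var : nat -> form
| Bot : form
| Top : form
| And : form -> form -> form
| Or  : form -> form -> form
| Imp : form -> form -> form.

Definition Neg (a : form) : form := Imp a Bot.
Definition Iff (a b : form) : form := And (Imp a b) (Imp b a).

Fixpoint subst (s : nat -> form) (f : form) : form :=
  match f with
  | Var p => s p
  | Bot => Bot
  | Top => Top
  | And a b => And (subst s a) (subst s b)
  | Or a b => Or (subst s a) (subst s b)
  | Imp a b => Imp (subst s a) (subst s b)
  end.

Inductive IPC : form -> Prop :=
| ax_K a b : IPC (Imp a (Imp b a))
| ax_S a b c : IPC (Imp (Imp a (Imp b c)) (Imp (Imp a b) (Imp a c)))
| ax_andE1 a b : IPC (Imp (And a b) a)
| ax_andE2 a b : IPC (Imp (And a b) b)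
| ax_andI a b : IPC (Imp a (Imp b (And a b)))
| ax_orI1 a b : IPC (Imp a (Or a b))
| ax_orI2 a b : IPC (Imp b (Or a b))
| ax_orE a b c : IPC (Imp (Imp a c) (Imp (Imp b c) (Imp (Or a b) c)))
| ax_efq a : IPC (Imp Bot a)
| ax_top : IPC Top
| ipc_mp a b : IPC (Imp a b) -> IPC a -> IPC b.

Fixpoint beval (v : nat -> bool) (f : form) : bool :=
  match f with
  | Var p => v p
  | Bot => false
  | Top => true
  | And a b => beval v a && beval v b
  | Or a b => beval v a || beval v b
  | Imp a b => implb (beval v a) (beval v b)
  end.

Definition CPC (f : form) : Prop := forall v, beval v f = true.

Definition closed_MP (T : form -> Prop) : Prop :=
  forall a b, T (Imp a b) -> T a -> T b.

Definition intermediate_theory (T : form -> Prop) : Prop :=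
  closed_MP T /\ (forall f, IPC f -> T f) /\ (forall f, T f -> CPC f).

Definition intermediate_logic (L : form -> Prop) : Prop :=
  intermediate_theory L /\ (forall s f, L f -> L (subst s f)).

Inductive derivable (T : form -> Prop) (Gamma : form -> Prop) : form -> Prop :=
| der_hyp f : Gamma f -> derivable T Gamma f
| der_thm f : T f -> derivable T Gamma f
| der_mp a b : derivable T Gamma (Imp a b) -> derivable T Gamma a ->
               derivable T Gamma b.

Definition negsub (f : form) : form := subst (fun p => Neg (Var p)) f.

Definition Lneg (L : form -> Prop) : form -> Prop := fun f => L (negsub f).

Definition single (a : form) : form -> Prop := fun x => x = a.
Definition pair (a b : form) : form -> Prop := fun x => x = a \/ x = b.

Definition stable (T : form -> Prop) (s : nat -> form) : Prop :=
  forall p, T (Iff (s p) (Neg (Neg (s p)))).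

Definition consistent (T : form -> Prop) (psi : form) : Prop :=
  ~ derivable T (single psi) Bot.

Definition projective (S : (nat -> form) -> Prop) (T : form -> Prop) (psi : form) : Prop :=
  exists s, S s /\ T (subst s psi) /\
    (forall p, derivable T (pair psi (s p)) (Var p)) /\
    (forall p, derivable T (pair psi (Var p)) (s p)).

(* Main.v *)
Require Import Defs.
From Stdlib Require Import Lia Arith Classical.

Definition ext (G : form -> Prop) (a : form) : form -> Prop := fun x => G x \/ x = a.
Notation D := (derivable IPC).

Lemma weak G f : D G f -> forall H, (forall x, G x -> H x) -> D H f.
Proof. induction 1; intros; [apply der_hyp; auto | apply der_thm; auto | eapply der_mp; eauto]. Qed.

Lemma ded G a b : D (ext G a) b -> D G (Imp a b).
Proof.
  induction 1.
  - destruct H as [H|H].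
    + eapply der_mp; [apply der_thm, ax_K | apply der_hyp; auto].
    + subst. eapply der_mp; [eapply der_mp; [apply der_thm, (ax_S a (Imp a a) a)|apply der_thm, ax_K]|apply der_thm, ax_K].
  - eapply der_mp; [apply der_thm, ax_K | apply der_thm; auto].
  - eapply der_mp; [eapply der_mp; [apply der_thm, ax_S|exact IHderivable1]|exact IHderivable2].
Qed.

Lemma hyp G a : D (ext G a) a.
Proof. apply der_hyp; right; auto. Qed.
Lemma up G a f : D G f -> D (ext G a) f.
Proof. intros H; eapply weak; eauto; unfold ext; auto. Qed.
Lemma mp G a b : D G (Imp a b) -> D G a -> D G b.
Proof. apply der_mp. Qed.
Lemma andI G a b : D G a -> D G b -> D G (And a b).
Proof. intros; eapply mp; [eapply mp; [apply der_thm, ax_andI|]|]; eauto. Qed.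
Lemma andE1 G a b : D G (And a b) -> D G a.
Proof. intros; eapply mp; [apply der_thm, ax_andE1|]; eauto. Qed.
Lemma andE2 G a b : D G (And a b) -> D G b.
Proof. intros; eapply mp; [apply der_thm, ax_andE2|]; eauto. Qed.
Lemma orI1 G a b : D G a -> D G (Or a b).
Proof. intros; eapply mp; [apply der_thm, ax_orI1|]; eauto. Qed.
Lemma orI2 G a b : D G b -> D G (Or a b).
Proof. intros; eapply mp; [apply der_thm, ax_orI2|]; eauto. Qed.
Lemma orE G a b c : D G (Or a b) -> D G (Imp a c) -> D G (Imp b c) -> D G c.
Proof. intros H H0 H1; eapply mp; [eapply mp; [eapply mp; [apply der_thm, (ax_orE a b c)|exact H0]|exact H1]|exact H]. Qed.
Lemma efq G a : D G Bot -> D G a.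
Proof. intros; eapply mp; [apply der_thm, ax_efq|]; eauto. Qed.

Fixpoint bnd (f : form) : nat :=
  match f with
  | Var p => S p
  | Bot | Top => 0
  | And a b | Or a b | Imp a b => Nat.max (bnd a) (bnd b)
  end.

Definition lit (s : nat -> form) (v : nat -> bool) p := if v p then s p else Neg (s p).

Lemma kal G s v : forall psi, (forall p, p < bnd psi -> D G (lit s v p)) ->
  D G (if beval v psi then subst s psi else Neg (subst s psi)).
Proof.
  induction psi; intros Hp; simpl in *.
  - specialize (Hp n ltac:(lia)); unfold lit in Hp; exact Hp.
  - apply ded, hyp.
  - apply der_thm, ax_top.
  - assert (Ha := IHpsi1 ltac:(intros; apply Hp; lia)).
    assert (Hb := IHpsi2 ltac:(intros; apply Hp; lia)).
    destruct (beval v psi1), (beval v psi2); simpl.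
    + apply andI; auto.
    + apply ded. eapply mp; [apply up; exact Hb| eapply andE2, hyp].
    + apply ded. eapply mp; [apply up; exact Ha| eapply andE1, hyp].
    + apply ded. eapply mp; [apply up; exact Ha| eapply andE1, hyp].
  - assert (Ha := IHpsi1 ltac:(intros; apply Hp; lia)).
    assert (Hb := IHpsi2 ltac:(intros; apply Hp; lia)).
    destruct (beval v psi1), (beval v psi2); simpl.
    + apply orI1; auto.
    + apply orI1; auto.
    + apply orI2; auto.
    + apply ded. eapply orE; [apply hyp| apply up, Ha | apply up, Hb].
  - assert (Ha := IHpsi1 ltac:(intros; apply Hp; lia)).
    assert (Hb := IHpsi2 ltac:(intros; apply Hp; lia)).
    destruct (beval v psi1), (beval v psi2); simpl.
    + apply ded, up, Hb.
    + apply ded. eapply mp; [apply up, Hb|]. eapply mp; [apply hyp|apply up, Ha].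
    + apply ded, up, Hb.
    + apply ded, efq. eapply mp; [apply up, Ha|apply hyp].
Qed.

Lemma subst_id f : subst Var f = f.
Proof. induction f; simpl; congruence. Qed.

Definition Gam v k : form -> Prop := fun x => exists p, p < k /\ x = lit Var v p.

Lemma D_empty f : D (fun _ => False) f -> IPC f.
Proof. induction 1; [contradiction| auto | eapply ipc_mp; eauto]. Qed.

Lemma glivenko phi : (forall v, beval v phi = true) -> IPC (Neg (Neg phi)).
Proof.
  intros Ht. set (n := bnd phi).
  assert (forall m, m <= n -> forall v, D (Gam v (n - m)) (Neg (Neg phi))).
  { induction m; intros Hm v.
    - replace (n - 0) with n by lia.
      assert (H := kal (Gam v n) Var v phi ltac:(intros p Hp; apply der_hyp; exists p; split; auto)).
      rewrite Ht, subst_id in H. apply ded. eapply mp; [apply hyp| apply up, H].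
    - set (k := n - S m).
      assert (Hk : n - m = S k) by (unfold k; lia).
      set (v1 := fun q => if Nat.eqb q k then true else v q).
      set (v0 := fun q => if Nat.eqb q k then false else v q).
      assert (H1 := IHm ltac:(lia) v1). assert (H0 := IHm ltac:(lia) v0).
      rewrite Hk in H1, H0.
      assert (H1' : D (ext (Gam v k) (Var k)) (Neg (Neg phi))).
      { eapply weak; [exact H1|]. intros x [p [Hp ->]].
        destruct (Nat.eq_dec p k) as [->|Hne].
        - right. unfold lit, v1. rewrite Nat.eqb_refl. reflexivity.
        - left. exists p. split; [lia|]. unfold lit, v1.
          apply Nat.eqb_neq in Hne. rewrite Hne. reflexivity. }
      assert (H0' : D (ext (Gam v k) (Neg (Var k))) (Neg (Neg phi))).
      { eapply weak; [exact H0|]. intros x [p [Hp ->]].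
        destruct (Nat.eq_dec p k) as [->|Hne].
        - right. unfold lit, v0. rewrite Nat.eqb_refl. reflexivity.
        - left. exists p. split; [lia|]. unfold lit, v0.
          apply Nat.eqb_neq in Hne. rewrite Hne. reflexivity. }
      apply ded in H1'. apply ded in H0'.
      apply ded. eapply mp; [eapply mp; [apply up, H0'|]|apply hyp].
      apply ded. eapply mp; [eapply mp; [apply up, up, H1'| apply hyp] | apply up, hyp]. }
  specialize (H n ltac:(lia) (fun _ => true)). replace (n - n) with 0 in H by lia.
  apply D_empty. eapply weak; [exact H|]. intros x [p [Hp _]]; lia.
Qed.

Lemma IPC_subst s f : IPC f -> IPC (subst s f).
Proof.
  induction 1; simpl;
  [apply ax_K|apply ax_S|apply ax_andE1|apply ax_andE2|apply ax_andI|apply ax_orI1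
  |apply ax_orI2|apply ax_orE|apply ax_efq|apply ax_top|eapply ipc_mp; eauto].
Qed.

Lemma IPC_Lneg L (HL : intermediate_logic L) f : IPC f -> Lneg L f.
Proof.
  intros H. destruct HL as [[_ [HI _]] _]. apply HI. apply IPC_subst, H.
Qed.

Lemma D_Lneg L (HL : intermediate_logic L) G f : D G f -> derivable (Lneg L) G f.
Proof.
  induction 1; [apply der_hyp; auto| apply der_thm, IPC_Lneg; auto| eapply der_mp; eauto].
Qed.

Definition E : form -> Prop := fun _ => False.

Theorem lemma4p4 (L : form -> Prop) (HL : intermediate_logic L) (phi : form) :
  consistent (Lneg L) (Neg phi) ->
  projective (stable (Lneg L)) (Lneg L) (Neg phi).
Proof.
  intros Hc.
  destruct (classic (exists v, beval v phi = false)) as [[v Hv]|Hn].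
  2:{ exfalso. apply Hc.
      assert (Ht : forall v, beval v phi = true).
      { intros v. destruct (beval v phi) eqn:E0; auto. exfalso; apply Hn; eauto. }
      eapply der_mp; [apply der_thm, IPC_Lneg, glivenko; auto| apply der_hyp; reflexivity]. }
  set (s := fun p => if v p then Imp (Neg phi) (Var p) else And (Neg phi) (Var p)).
  exists s. split; [|split; [|split]].
  -
    intros p. destruct HL as [[_ [HI _]] _]. unfold Lneg. apply HI. apply D_empty.
    unfold s; destruct (v p); simpl.
    + apply andI.
      * apply ded, ded. eapply mp; apply hyp || (apply up, hyp).
      * apply ded, ded, ded. eapply mp; [apply up, up, hyp|].
        apply ded. eapply mp; [eapply mp; [apply hyp| apply up, up, hyp]|apply up, hyp].
    + apply andI.
      * apply ded, ded. eapply mp; apply hyp || (apply up, hyp).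
      * apply ded. apply andI.
        -- apply ded. eapply mp; [apply up, hyp|].
           apply ded. eapply mp; [eapply andE1, hyp| apply up, hyp].
        -- apply ded. eapply mp; [apply up, hyp|].
           apply ded. eapply mp; [eapply andE2, hyp| apply up, hyp].
  -
    apply IPC_Lneg; auto. apply D_empty. simpl.
    assert (HA : forall psi, D (ext E (Neg phi)) (Iff (subst s psi) psi)).
    { induction psi; simpl.
      - unfold s; destruct (v n); apply andI.
        + apply ded. eapply mp; [apply hyp|apply up, hyp].
        + apply ded, ded, up, hyp.
        + apply ded. eapply andE2, hyp.
        + apply ded. apply andI; [apply up, hyp|apply hyp].
      - apply andI; apply ded, hyp.
      - apply andI; apply ded, hyp.
      - apply andI; apply ded; apply andI.
        + eapply mp; [eapply andE1, up, IHpsi1| eapply andE1, hyp].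
        + eapply mp; [eapply andE1, up, IHpsi2| eapply andE2, hyp].
        + eapply mp; [eapply andE2, up, IHpsi1| eapply andE1, hyp].
        + eapply mp; [eapply andE2, up, IHpsi2| eapply andE2, hyp].
      - apply andI; apply ded; (eapply orE; [apply hyp| |]).
        + apply ded, orI1. eapply mp; [eapply andE1, up, up, IHpsi1| apply hyp].
        + apply ded, orI2. eapply mp; [eapply andE1, up, up, IHpsi2| apply hyp].
        + apply ded, orI1. eapply mp; [eapply andE2, up, up, IHpsi1| apply hyp].
        + apply ded, orI2. eapply mp; [eapply andE2, up, up, IHpsi2| apply hyp].
      - apply andI; apply ded, ded.
        + eapply mp; [eapply andE1, up, up, IHpsi2|].
          eapply mp; [apply up, hyp|]. eapply mp; [eapply andE2, up, up, IHpsi1| apply hyp].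
        + eapply mp; [eapply andE2, up, up, IHpsi2|].
          eapply mp; [apply up, hyp|]. eapply mp; [eapply andE1, up, up, IHpsi1| apply hyp]. }
    assert (HB := kal (ext E (Neg (Neg phi))) s v phi).
    rewrite Hv in HB.
    assert (HB' : D (ext E (Neg (Neg phi))) (Neg (subst s phi))).
    { apply HB. intros p _. unfold lit, s. destruct (v p).
      - apply ded, efq. eapply mp; [apply up, hyp| apply hyp].
      - apply ded. eapply mp; [apply up, hyp| eapply andE1, hyp]. }
    apply ded in HB'.
    assert (HA' : D (ext E (Neg phi)) (Neg (subst s phi))).
    { apply ded. eapply mp; [apply up, hyp|]. eapply mp; [eapply andE1, up, HA| apply hyp]. }
    apply ded in HA'.
    apply ded. eapply mp; [eapply mp; [apply up, HB'|]|apply hyp].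
    apply ded. eapply mp; [eapply mp; [apply up, up, HA'|apply hyp]|apply up, hyp].
  - intros p. apply D_Lneg; auto. unfold s; destruct (v p).
    + eapply mp; apply der_hyp; unfold pair; auto.
    + eapply andE2. apply der_hyp; unfold pair; auto.
  - intros p. apply D_Lneg; auto. unfold s; destruct (v p).
    + apply ded. apply up. apply der_hyp; unfold pair; auto.
    + apply andI; apply der_hyp; unfold pair; auto.
Qed.
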